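(* Let $I=(i_1<i_2<\cdots<i_r)$ be strictly increasing with $r\geq1$, and let $\chi_I=\sum_{\varepsilon\in\{0,1\}^r}a_I^\varepsilon w_I^\varepsilon$ with $a_I^\varepsilon\in\mathcal B$. Then: (A) if $\alpha(\chi_I)+\beta(\chi_I)=\gamma(\chi_I)$, then $\chi_I=a(S_I-w_I)$ for some $a\in\mathcal B$; (B) if $\beta(\chi_I)=\gamma(\chi_I)+\delta(\chi_I)$, then $\chi_I=a(S_I-w'_I)$ for some $a\in\mathcal B$.
   Context: $\mathcal B$ is a graded commutative rational algebra and $W$ a graded rational vector space concentrated in odd degrees with basis $\{w_i\}$ indexed by a totally ordered set. In $\mathcal B\otimes\land W\otimes\land W$ write $w_i^0=w_i=1\otimes w_i\otimes1$, $w_i^1=w'_i=1\otimes1\otimes w_i$, $w_I^\varepsilon=w_{i_1}^{\epsilon_1}\cdots w_{i_r}^{\epsilon_r}$, $w_I=w_{i_1}\cdots w_{i_r}$, $w'_I=w'_{i_1}\cdots w'_{i_r}$, $S_I=(w_{i_1}+w'_{i_1})\cdots(w_{i_r}+w'_{i_r})$. In $\mathcal B\otimes\land W^{\otimes3}$ write $w,w',w''$ for $w$ in the three copies. Algebra maps $\alpha,\beta,\gamma,\delta\colon\mathcal B\otimes\land W\otimes\land W\to\mathcal B\otimes\land W\otimes\land W\otimes\land W$, identity on $\mathcal B$: $\alpha(w)=w,\alpha(w')=w'$; $\beta(w)=w+w',\beta(w')=w''$; $\gamma(w)=w,\gamma(w')=w'+w''$; $\delta(w)=w',\delta(w')=w''$.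 *)

(* Defs.v *)
From HB Require Import structures.
From mathcomp Require Import all_boot all_order all_algebra.
Unset Printing Implicit Defensive.
Import Order.TTheory GRing.Theory Num.Theory.
Local Open Scope ring_scope.

(* Concrete model of B (x) /\W (x) /\W and B (x) /\W (x) /\W (x) /\W.
   A generator is a pair (c, i) : nat * T meaning "w_i in copy number c"
   (c = 0 : w_i, c = 1 : w'_i, c = 2 : w''_i).  All generators have odd
   degree, so the algebra is B (x) (exterior algebra on these generators),
   a free B-module on the duplicate-free monomials.
   An element is represented by its coordinate function  seq gen -> B :
   for a word m of generators, the value is the coefficient of the
   monomial m (zero unless m is duplicate-free; the coefficients at two
   permutations of a word differ by the sign of the permutation).
   Two elements are equal iff their coordinate functions agree at every m. *)

Section Ext.
Context {disp : Order.disp_t} {T : orderType disp} {B : lmodType rat}.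

Definition gen := (nat * T)%type.

(* an auxiliary total order on generators, used only to compute signs *)
Definition gen_lt (g h : gen) : bool :=
  ((g.2 < h.2)%O || ((g.2 == h.2) && (g.1 < h.1)%N)).

Fixpoint inv (w : seq gen) : nat :=
  match w with
  | [::] => 0%N
  | g :: w' => (count (fun h => gen_lt h g) w' + inv w')%N
  end.

(* coefficient of the monomial m in the word (product of generators) w *)
Definition wcoef (w m : seq gen) : rat :=
  if uniq w && perm_eq w m then (-1) ^+ (inv w + inv m) else 0.

(* expansion of a product L_1 L_2 ... L_r of linear forms, each L_k being
   a sum of generators (given as the list of its summands), as a list of
   words (each with coefficient 1) *)
Fixpoint prodlin (Ls : seq (seq gen)) : seq (seq gen) :=
  match Ls with
  | [::] => [:: [::]]
  | L :: Ls' => [seq g :: w | g <- L, w <- prodlin Ls']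
  end.

(* the element  a * L_1 * ... * L_r  (a in B) *)
Definition elt_of (Ls : seq (seq gen)) (a : B) : seq gen -> B :=
  fun m => \sum_(w <- prodlin Ls) (wcoef w m) *: a.

(* An algebra map B (x) /\W (x) /\W -> B (x) /\W^{(x)3}, identity on B, is
   determined by the images f e i of the generators w_i^e (e = false : w_i,
   e = true : w'_i); here each image is a sum of generators. *)
Definition alpha (e : bool) (i : T) : seq gen :=
  if e then [:: (1%N, i)] else [:: (0%N, i)].
Definition beta (e : bool) (i : T) : seq gen :=
  if e then [:: (2%N, i)] else [:: (0%N, i); (1%N, i)].
Definition gamma (e : bool) (i : T) : seq gen :=
  if e then [:: (1%N, i); (2%N, i)] else [:: (0%N, i)].
Definition delta (e : bool) (i : T) : seq gen :=
  if e then [:: (2%N, i)] else [:: (1%N, i)].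
(* the identity (the element itself, in B (x) /\W (x) /\W) *)
Definition id2 (e : bool) (i : T) : seq gen :=
  if e then [:: (1%N, i)] else [:: (0%N, i)].

Definition mono_img (f : bool -> T -> seq gen) (I : seq T) (eps : seq bool)
  (a : B) : seq gen -> B :=
  elt_of [seq f p.1 p.2 | p <- zip eps I] a.

(* image under f of  chi_I = sum_eps a_I^eps w_I^eps *)
Definition chi_img (f : bool -> T -> seq gen) (I : seq T)
  (A : (size I).-tuple bool -> B) : seq gen -> B :=
  fun m => \sum_(eps : (size I).-tuple bool) mono_img f I eps (A eps) m.

Definition S_minus_w (I : seq T) (a : B) : seq gen -> B :=
  fun m => elt_of [seq [:: (0%N, i); (1%N, i)] | i <- I] a m
           - elt_of [seq [:: (0%N, i)] | i <- I] a m.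
Definition S_minus_w' (I : seq T) (a : B) : seq gen -> B :=
  fun m => elt_of [seq [:: (0%N, i); (1%N, i)] | i <- I] a m
           - elt_of [seq [:: (1%N, i)] | i <- I] a m.
End Ext.

(* Main.v *)
Require Import Defs.
From HB Require Import structures.
From mathcomp Require Import all_boot all_order all_algebra.
Import Order.TTheory GRing.Theory Num.Theory.
Local Open Scope ring_scope.

Section Proofs.
Context {disp : Order.disp_t} {T : orderType disp} {B : lmodType rat}.
Local Notation G := (nat * T)%type.

Definition word (h : bool -> nat) (e : seq bool) (I : seq T) : seq G :=
  [seq (h p.1, p.2) | p <- zip e I].

Lemma big_prodlin_cons (V : zmodType) (F : seq G -> V) L Ls :
  \sum_(w <- prodlin (L :: Ls)) F w = \sum_(g <- L) \sum_(w <- prodlin Ls) F (g :: w).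
Proof. by rewrite /= big_flatten /= big_map; apply: eq_bigr => g _; rewrite big_map. Qed.

Lemma prodlin_snd (Ls : seq (seq G)) I w :
  all2 (fun L i => all (fun g : G => g.2 == i) L) Ls I -> w \in prodlin Ls -> map snd w = I.
Proof.
elim: Ls I w => [|L Ls IH] [|i I] w //=.
- by rewrite inE => _ /eqP ->.
- move=> /andP[hL hLs] /flatten_mapP[g gL /mapP[w' w'P ->]] /=.
  by rewrite (eqP (allP hL g gL)) (IH _ _ hLs w'P).
Qed.

Lemma wcoef_eq {I : seq T} (HI : sorted (fun x y => (x < y)%O) I) {w m : seq G} :
  map snd w = I -> map snd m = I -> wcoef w m = (w == m)%:R.
Proof.
move=> hw hm.
have tr : transitive (relpre (@snd nat T) (<%O : rel T)) by move=> y x z /=; apply: Order.POrderTheory.lt_trans.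
have irr : irreflexive (relpre (@snd nat T) (<%O : rel T)) by move=> x; apply: ltxx.
have sw : sorted (relpre (@snd nat T) <%O) w by rewrite -sorted_map hw.
have sm : sorted (relpre (@snd nat T) <%O) m by rewrite -sorted_map hm.
have uw := sorted_uniq tr irr sw.
rewrite /wcoef uw /=; case: eqP => [->|ne].
  by rewrite perm_refl -signr_odd oddD addbb expr0.
case: ifP => // pwm; case: ne; exact: (irr_sorted_eq tr irr sw sm (perm_mem pwm)).
Qed.

Lemma sum_eq_uniq (L : seq G) x : uniq L -> \sum_(g <- L) ((g == x)%:R : rat) = (x \in L)%:R.
Proof.
elim: L => [|y L IH] /=; first by rewrite big_nil.
move=> /andP[yL uL]; rewrite big_cons IH // inE eq_sym.
case: eqP => [->|] /=; first by rewrite (negbTE yL) addr0.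
by rewrite add0r.
Qed.

Lemma sum_prodlin_eq (Ls : seq (seq G)) m : all uniq Ls ->
  \sum_(w <- prodlin Ls) ((w == m)%:R : rat) = (all2 (fun x L => x \in L) m Ls)%:R.
Proof.
elim: Ls m => [|L Ls IH] m /=.
  by rewrite big_seq1; case: m.
move=> /andP[uL uLs]; rewrite big_prodlin_cons.
case: m => [|x m].
  by rewrite big1 // => g _; rewrite big1.
transitivity (\sum_(g <- L) (g == x)%:R * \sum_(w <- prodlin Ls) ((w == m)%:R : rat)).
  apply: eq_bigr => g _; rewrite mulr_sumr; apply: eq_bigr => w _.
  by rewrite eqseq_cons -mulnb natrM.
by rewrite -big_distrl /= sum_eq_uniq // IH // -natrM mulnb.
Qed.

Lemma mono_val (f : bool -> T -> seq G) (I : seq T) (HI : sorted (fun x y => (x < y)%O) I) (eps : seq bool) (a : B) (m : seq G)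
  (hs : forall e i, all (fun g : G => g.2 == i) (f e i)) (hu : forall e i, uniq (f e i)) :
  size eps = size I -> map snd m = I ->
  mono_img f I eps a m = (all2 (fun x L => x \in L) m [seq f p.1 p.2 | p <- zip eps I])%:R *: a.
Proof.
move=> se.
have hL : all2 (fun L i => all (fun g : G => g.2 == i) L) [seq f p.1 p.2 | p <- zip eps I] I.
  by elim: I eps {HI} se => [|i I IH] [|e eps] //= [se]; rewrite hs (IH _ se).
move=> hm; rewrite /mono_img /elt_of -scaler_suml.
rewrite -sum_prodlin_eq; last by rewrite all_map; apply/allP => p _; exact: hu.
congr (_ *: _); apply: eq_big_seq => w wP.
exact: (wcoef_eq HI (prodlin_snd _ _ _ hL wP) hm).
Qed.

Lemma all2_mem_word (f : bool -> T -> seq G) (h : bool -> nat) (Q : pred bool) (g : bool -> bool) (I : seq T) (eps eps0 : seq bool)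
  (hm : forall e b i, ((h b, i) \in f e i) = Q b && (e == g b)) :
  size eps = size I -> size eps0 = size I ->
  all2 (fun x L => x \in L) (word h eps0 I) [seq f p.1 p.2 | p <- zip eps I]
  = all Q eps0 && (eps == map g eps0).
Proof.
elim: I eps eps0 => [|i I IH] [|e eps] [|b eps0] //= [s1] [s2].
rewrite hm IH // eqseq_cons.
by case: (Q b); case: (e == g b); case: (all Q eps0).
Qed.

Lemma sum_tuple_pick n (F : n.-tuple bool -> B) t :
  \sum_(eps : n.-tuple bool) ((eps == t)%:R : rat) *: F eps = F t.
Proof.
rewrite (bigD1 t) //= eqxx scale1r big1 ?addr0 // => e /negbTE ->.
by rewrite scale0r.
Qed.

Lemma chi_at (f : bool -> T -> seq G) (h : bool -> nat) (Q : pred bool) (g : bool -> bool) (I : seq T) (HI : sorted (fun x y => (x < y)%O) I)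
  (A : (size I).-tuple bool -> B) (eps0 : (size I).-tuple bool)
  (hs : forall e i, all (fun g : G => g.2 == i) (f e i)) (hu : forall e i, uniq (f e i))
  (hm : forall e b i, ((h b, i) \in f e i) = Q b && (e == g b)) :
  chi_img f I A (word h eps0 I) = if all Q eps0 then A (map_tuple g eps0) else 0.
Proof.
rewrite /chi_img.
have hmm : map snd (word h eps0 I) = I.
  by rewrite /word -map_comp (eq_map (g := snd)) //; apply: unzip2_zip; rewrite size_tuple.
under eq_bigr do rewrite (mono_val _ _ HI _ _ _ hs hu (size_tuple _) hmm)
  (all2_mem_word _ _ _ _ _ _ _ hm (size_tuple _) (size_tuple _)).
case: (all Q eps0) => /=.
  rewrite -[RHS](@sum_tuple_pick _ A (map_tuple g eps0)); apply: eq_bigr => e _.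
  by rewrite -val_eqE.
by rewrite big1 // => e _; rewrite scale0r.
Qed.

Lemma prodlin_single (s : seq G) : prodlin (map (fun x => [:: x]) s) = [:: s].
Proof. by elim: s => //= x s ->. Qed.

Lemma mono_id2 (I : seq T) (eps : seq bool) (a : B) m :
  mono_img id2 I eps a m = wcoef (word nat_of_bool eps I) m *: a.
Proof.
rewrite /mono_img /elt_of.
have -> : [seq id2 p.1 p.2 | p <- zip eps I] = map (fun x => [:: x]) (word nat_of_bool eps I).
  by rewrite /word -map_comp; apply: eq_map => -[[] i].
by rewrite prodlin_single big_seq1.
Qed.

Lemma word_nseq h c (I : seq T) : word h (nseq (size I) c) I = map (fun i => (h c, i)) I.
Proof. by rewrite /word; elim: I => //= i I ->. Qed.

Lemma sum_tuple_cons (V : zmodType) n (F : n.+1.-tuple bool -> V) :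
  \sum_(t : n.+1.-tuple bool) F t =
  \sum_(t : n.-tuple bool) F [tuple of false :: t] + \sum_(t : n.-tuple bool) F [tuple of true :: t].
Proof.
have -> : \sum_(t : n.-tuple bool) F [tuple of false :: t] + \sum_(t : n.-tuple bool) F [tuple of true :: t]
  = \sum_(b : bool) \sum_(t : n.-tuple bool) F [tuple of b :: t] by rewrite big_bool addrC.
rewrite pair_big /= (reindex (fun p : bool * n.-tuple bool => [tuple of p.1 :: p.2])) //=.
apply: onW_bij; exists (fun t => (thead t, [tuple of behead t])) => [[b t]|t] /=.
  by congr (_, _); apply: val_inj.
by rewrite [RHS]tuple_eta.
Qed.

Lemma expand (V : zmodType) (I : seq T) (F : seq G -> V) :
  \sum_(w <- prodlin [seq [:: (0%N, i); (1%N, i)] | i <- I]) F w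
  = \sum_(eps : (size I).-tuple bool) F (word nat_of_bool eps I).
Proof.
elim: I F => [|i I IH] F.
  rewrite /= big_seq1 (big_pred1 [tuple]) // => t /=.
  by case: t => -[|x s] p //=.
rewrite map_cons big_prodlin_cons big_cons big_cons big_nil addr0 !IH.
by rewrite sum_tuple_cons.
Qed.

Definition h2 (b : bool) : nat := if b then 2%N else 1%N.

Lemma hs_all (f : bool -> T -> seq G) : f = alpha \/ f = beta \/ f = gamma \/ f = delta \/ f = id2 ->
  forall e i, all (fun g : G => g.2 == i) (f e i).
Proof. by move=> H e i; case: H => [->|[->|[->|[->|->]]]]; case: e => /=; rewrite ?eqxx. Qed.

Lemma hu_all (f : bool -> T -> seq G) : f = alpha \/ f = beta \/ f = gamma \/ f = delta \/ f = id2 ->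
  forall e i, uniq (f e i).
Proof. by move=> H e i; case: H => [->|[->|[->|[->|->]]]]; case: e => //=; rewrite inE. Qed.

Lemma m1 e b (i : T) : ((nat_of_bool b, i) \in alpha e i) = predT b && (e == b).
Proof. case: e; case: b => /=; rewrite ?inE /= ?eqxx //. Qed.
Lemma m2 e b (i : T) : ((nat_of_bool b, i) \in beta e i) = predT b && (e == false).
Proof. case: e; case: b => /=; rewrite ?inE /= ?eqxx //. Qed.
Lemma m3 e b (i : T) : ((nat_of_bool b, i) \in gamma e i) = predT b && (e == b).
Proof. case: e; case: b => /=; rewrite ?inE /= ?eqxx //. Qed.
Lemma m4 e b (i : T) : ((h2 b, i) \in alpha e i) = pred1 false b && (e == true).
Proof. case: e; case: b => /=; rewrite ?inE /= ?eqxx //. Qed.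
Lemma m5 e b (i : T) : ((h2 b, i) \in beta e i) = predT b && (e == b).
Proof. case: e; case: b => /=; rewrite ?inE /= ?eqxx //. Qed.
Lemma m6 e b (i : T) : ((h2 b, i) \in gamma e i) = predT b && (e == true).
Proof. case: e; case: b => /=; rewrite ?inE /= ?eqxx //. Qed.
Lemma m7 e b (i : T) : ((nat_of_bool b, i) \in delta e i) = pred1 true b && (e == false).
Proof. case: e; case: b => /=; rewrite ?inE /= ?eqxx //. Qed.

Lemma map_tuple_id n (t : n.-tuple bool) : map_tuple (fun b => b) t = t.
Proof. by apply: val_inj; rewrite /= map_id. Qed.

Lemma map_const_tuple n (c : bool) (t : n.-tuple bool) :
  map_tuple (fun _ : bool => c) t = [tuple of nseq n c].
Proof.
apply: val_inj => /=; case: t => s /= /eqP <-.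
by elim: s => //= x s ->.
Qed.

Lemma all_pred1_tuple n (c : bool) (t : n.-tuple bool) :
  all (pred1 c) t = (t == [tuple of nseq n c]).
Proof.
apply/all_pred1P/eqP => [E|->]; first by apply: val_inj; rewrite /= E size_tuple.
by rewrite /= size_nseq.
Qed.

End Proofs.

Theorem mainTheorem11 (disp : Order.disp_t) (T : orderType disp)
  (B : lmodType rat) (I : seq T) (HI : sorted (fun x y => (x < y)%O) I)
  (Hr : (0 < size I)%N) (A : (size I).-tuple bool -> B) :
  ((forall m, chi_img alpha I A m + chi_img beta I A m = chi_img gamma I A m) ->
     exists a : B, forall m, chi_img id2 I A m = S_minus_w I a m) /\
  ((forall m, chi_img beta I A m = chi_img gamma I A m + chi_img delta I A m) ->
     exists a : B, forall m, chi_img id2 I A m = S_minus_w' I a m).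
Proof.
pose bot := [tuple of nseq (size I) false] : (size I).-tuple bool.
pose top := [tuple of nseq (size I) true] : (size I).-tuple bool.
have hsa := @hs_all _ T alpha (or_introl erefl).
have hua := @hu_all _ T alpha (or_introl erefl).
have hsb := @hs_all _ T beta (or_intror (or_introl erefl)).
have hub := @hu_all _ T beta (or_intror (or_introl erefl)).
have hsg := @hs_all _ T gamma (or_intror (or_intror (or_introl erefl))).
have hug := @hu_all _ T gamma (or_intror (or_intror (or_introl erefl))).
have hsd := @hs_all _ T delta (or_intror (or_intror (or_intror (or_introl erefl)))).
have hud := @hu_all _ T delta (or_intror (or_intror (or_intror (or_introl erefl)))).
have ca := fun h Q g eps0 hm => @chi_at _ _ _ alpha h Q g I HI A eps0 hsa hua hm.
have cb := fun h Q g eps0 hm => @chi_at _ _ _ beta h Q g I HI A eps0 hsb hub hm.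
have cg := fun h Q g eps0 hm => @chi_at _ _ _ gamma h Q g I HI A eps0 hsg hug hm.
have cd := fun h Q g eps0 hm => @chi_at _ _ _ delta h Q g I HI A eps0 hsd hud hm.
have expS : forall (a : B) m, elt_of [seq [:: (0%N, i); (1%N, i)] | i <- I] a m
    = \sum_(eps : (size I).-tuple bool) wcoef (word nat_of_bool eps I) m *: a.
  by move=> a m; rewrite /elt_of expand.
have chiE : forall m, chi_img id2 I A m
    = \sum_(eps : (size I).-tuple bool) wcoef (word nat_of_bool eps I) m *: A eps.
  by move=> m; rewrite /chi_img; apply: eq_bigr => e _; rewrite mono_id2.
have wc : forall (c : bool) (a : B) m,
    elt_of [seq [:: (nat_of_bool c, i)] | i <- I] a m
    = wcoef (word nat_of_bool (nseq (size I) c) I) m *: a.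
  move=> c a m; rewrite /elt_of word_nseq.
  have -> : [seq [:: (nat_of_bool c, i)] | i <- I]
      = map (fun x => [:: x]) [seq (nat_of_bool c, i) | i <- I] by rewrite -map_comp.
  by rewrite prodlin_single big_seq1.
split => H.
- have Abot : A bot = 0.
    have := H (word nat_of_bool bot I).
    rewrite (ca _ _ _ bot (@m1 _ _)) (cb _ _ _ bot (@m2 _ _)) (cg _ _ _ bot (@m3 _ _)).
    rewrite !all_predT map_tuple_id map_const_tuple => /eqP.
    by rewrite -subr_eq0 addrK => /eqP.
  have Atop : forall eps0, eps0 != bot -> A eps0 = A top.
    move=> eps0 ne; have := H (word h2 eps0 I).
    rewrite (ca _ _ _ eps0 (@m4 _ _)) (cb _ _ _ eps0 (@m5 _ _)) (cg _ _ _ eps0 (@m6 _ _)).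
    by rewrite !all_predT all_pred1_tuple (negbTE ne) add0r map_tuple_id map_const_tuple.
  exists (A top) => m.
  rewrite chiE /S_minus_w expS (wc false).
  rewrite (bigD1 bot) //= [in RHS](bigD1 bot) //= Abot scaler0 add0r addrAC subrr add0r.
  by apply: eq_bigr => e ne; rewrite Atop.
- have Atop : A top = 0.
    have := H (word nat_of_bool top I).
    rewrite (cb _ _ _ top (@m2 _ _)) (cg _ _ _ top (@m3 _ _)) (cd _ _ _ top (@m7 _ _)).
    rewrite !all_predT all_pred1_tuple eqxx map_tuple_id map_const_tuple => E.
    by apply: (addIr (A bot)); rewrite add0r -E.
  have Abot : forall eps0, eps0 != top -> A eps0 = A bot.
    move=> eps0 ne; have := H (word nat_of_bool eps0 I).
    rewrite (cb _ _ _ eps0 (@m2 _ _)) (cg _ _ _ eps0 (@m3 _ _)) (cd _ _ _ eps0 (@m7 _ _)).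
    by rewrite !all_predT all_pred1_tuple (negbTE ne) addr0 map_tuple_id map_const_tuple.
  exists (A bot) => m.
  rewrite chiE /S_minus_w' expS (wc true).
  rewrite (bigD1 top) //= [in RHS](bigD1 top) //= Atop scaler0 add0r addrAC subrr add0r.
  by apply: eq_bigr => e ne; rewrite Abot.
Qed.
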